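(* Let $d$ be a positive integer, $0\le\kappa<d$ real, and $K>0$. Let $\tau,\eta>0$ be constants, and for a positive integer $N$ put $r=\eta(\log N)^{\frac{d\kappa}{d-\kappa}}$ (taken to be an integer) and let $\mathcal{P}_I$ be the set of primes in $I=[\tau(\log N)^{\frac{d}{d-\kappa}},2\tau(\log N)^{\frac{d}{d-\kappa}}]$. Let $S\subseteq[N]^d$ be nonempty and occupy at most $Kp^{\kappa}$ residue classes modulo $p$ for every $p\in\mathcal{P}_I$. There is a constant $C_1$ (depending only on $K$ and $\kappa$) such that if $\eta\ge C_1\tau^{\kappa}$, then there exists $c>0$ (independent of $N$, $S$ and $p$) such that for all sufficiently large $N$ and every prime $p\in\mathcal{P}_I$, there are at least $c|S|^{r+1}$ tuples $(x,L)\in S\times S^r$ that are good mod $p$.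
   Context: A tuple $(x,L)\in S\times S^r$, with $L=(\ell_1,\ldots,\ell_r)$, is called good mod $p$ if $x\equiv \ell_i \pmod p$ (coordinatewise) for some $i$, and bad otherwise. $S^r$ denotes the set of ordered $r$-tuples of elements of $S$. *)

(* Defs.v *)
From mathcomp Require Import all_boot.
From Stdlib Require Import Reals.
Set Implicit Arguments. Unset Strict Implicit. Unset Printing Implicit Defensive.

(* Points of [0..N]^d; membership in [N]^d = {1..N}^d is imposed by [in_box]. *)
Definition pt (d N : nat) := {ffun 'I_d -> 'I_N.+1}.

Definition in_box d N (S : {set pt d N}) : Prop :=
  forall x, x \in S -> forall i, (0 < x i)%N.

Definition residue d N (p : nat) (x : pt d N) : {ffun 'I_d -> nat} :=
  [ffun i => (x i : nat) %% p].

Definition num_classes d N (p : nat) (S : {set pt d N}) : nat :=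
  size (undup [seq residue p x | x <- enum S]).

Definition congr_mod d N (p : nat) (x y : pt d N) : bool :=
  [forall i, (x i : nat) == y i %[mod p]].

Definition good d N (p r : nat) (x : pt d N) (L : {ffun 'I_r -> pt d N}) : bool :=
  [exists i, congr_mod p x (L i)].

Definition good_count d N (p r : nat) (S : {set pt d N}) : nat :=
  #|[set xL : pt d N * {ffun 'I_r -> pt d N} |
      [&& xL.1 \in S, [forall i, xL.2 i \in S] & good p xL.1 xL.2]]|.

Definition r_of (eta : R) (d : nat) (kappa : R) (N : nat) : nat :=
  Z.to_nat (Int_part (eta * Rpower (ln (INR N)) (INR d * kappa / (INR d - kappa)))).

Definition in_PI (tau : R) (d : nat) (kappa : R) (N p : nat) : Prop :=
  prime p /\
  (tau * Rpower (ln (INR N)) (INR d / (INR d - kappa)) <= INR p)%R /\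
  (INR p <= 2 * tau * Rpower (ln (INR N)) (INR d / (INR d - kappa)))%R.

(* Main.v *)
Require Import Defs.
From mathcomp Require Import all_boot zify.
Set Implicit Arguments. Unset Strict Implicit. Unset Printing Implicit Defensive.

Lemma bern (a b k : nat) : b ^ k * (a + b + k * a) <= (a + b) ^ k.+1.
Proof.
elim: k => [|k IH]; first by rewrite expn0 expn1 mul0n addn0 mul1n.
have h : b * (a + b + k.+1 * a) <= (a + b) * (a + b + k * a) by nia.
rewrite expnS [(a + b) ^ k.+2]expnS.
move: IH h; set X := b ^ k; set Y := (a + b) ^ k.+1; set Z := a + b + k * a.
set W := a + b + k.+1 * a => IH h.
apply: (leq_trans _ (leq_mul (leqnn (a+b)) IH)).
rewrite -mulnA mulnCA [_ * (X * Z)]mulnCA.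
by apply: leq_mul.
Qed.

Lemma half_bound (n a r : nat) : 0 < n -> a <= n -> n <= r * a -> 2 * (n - a) ^ r <= n ^ r.
Proof.
move=> n0 an nra.
have := bern a (n - a) r. rewrite subnKC // expnS => h.
have h2 : (n - a) ^ r * (2 * n) <= n * n ^ r.
  apply: leq_trans h; apply: leq_mul => //.
  lia.
rewrite -(leq_pmul2l n0); move: h2.
set X := (n - a) ^ r; set Y := n ^ r; lia.
Qed.

Lemma congrE d N p (x y : pt d N) : congr_mod p x y = (residue p x == residue p y).
Proof.
apply/forallP/eqP => [h|h i].
  by apply/ffunP => i; rewrite !ffunE; apply/eqP/h.
by move/ffunP: h => /(_ i); rewrite !ffunE => ->.
Qed.

Lemma card_allin (T : finType) r (A : {set T}) :
  #|[set L : {ffun 'I_r -> T} | [forall i, L i \in A]]| = #|A| ^ r.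
Proof.
rewrite -[r in _ ^ r]card_ord -card_ffun_on; apply: eq_card => L.
by rewrite inE.
Qed.

Lemma part_bound (T : finType) (V : eqType) (f : T -> V) (k n : nat) (U : seq V) :
  forall A : {set T}, (forall x, x \in A -> f x \in U) ->
  (forall c, k * #|[set x in A | f x == c]| <= n) -> k * #|A| <= size U * n.
Proof.
elim: U => [|c U IH] A hU hc.
  rewrite mul0n leqn0 muln_eq0 cards_eq0; apply/orP; right.
  by apply/eqP/setP => x; rewrite inE; apply/negbTE/negP => /hU.
rewrite -(cardsID [set x in A | f x == c] A) mulnDr /= mulSn.
apply: leq_add.
  by apply: leq_trans (hc c); rewrite leq_mul2l; apply/orP; right;
     apply: subset_leq_card; apply/subsetP => x; rewrite !inE => /andP[].
apply: IH.
  move=> x; rewrite !inE; case/andP => hn hA; move: (hU x hA); rewrite inE.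
  by rewrite hA /= in hn; case/orP => // /eqP e; rewrite e eqxx in hn.
move=> c'; apply: leq_trans (hc c'); rewrite leq_mul2l; apply/orP; right.
by apply: subset_leq_card; apply/subsetP => x; rewrite !inE; case/andP => /andP[_ ->] ->.
Qed.

Lemma comb d N p r (S : {set pt d N}) : S != set0 -> 2 * num_classes p S <= r ->
  #|S| ^ r.+1 <= 4 * good_count p r S.
Proof.
move=> Sn0 hr.
set n := #|S|. set m := num_classes p S.
have n0 : 0 < n by rewrite card_gt0.
pose cls (x : pt d N) := [set y in S | residue p y == residue p x].
have clsS (x : pt d N) : cls x \subset S by apply/subsetP => y; rewrite inE => /andP[].
have clsx (x : pt d N) : x \in S -> x \in cls x by move=> xS; rewrite inE xS eqxx.
pose small := [set x in S | 2 * m * #|cls x| < n].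
have smallS : small \subset S by apply/subsetP => y; rewrite inE => /andP[].
have hsmall : 2 * #|small| <= n.
  set U := undup [seq residue p x | x <- enum S].
  have hU : forall x, x \in S -> residue p x \in U.
    by move=> x xS; rewrite mem_undup; apply: map_f; rewrite mem_enum.
  have m0 : 0 < m.
    case/set0Pn: Sn0 => x xS; rewrite /m /num_classes -/U.
    by case: U hU => [|? ?] hU //; move: (hU x xS).
  have h1 : forall x, x \in small -> residue p x \in U.
    by move=> x; rewrite inE => /andP[/hU].
  have h2 : forall c, 2 * m * #|[set x in small | residue p x == c]| <= n.
    move=> c; case: (boolP ([set x in small | residue p x == c] == set0)) => [/eqP ->|/set0Pn [x0]].
      by rewrite cards0 muln0.
    rewrite !inE => /andP[/andP[x0S hx0] /eqP e0].
    apply: leq_trans (ltnW hx0); rewrite leq_mul2l; apply/orP; right.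
    apply: subset_leq_card; apply/subsetP => y; rewrite !inE.
    by case/andP => /andP[-> _] /eqP ->; rewrite e0 eqxx.
  have h := @part_bound _ _ (residue p) (2 * m) n U small h1 h2.
  rewrite -(leq_pmul2l m0); apply: leq_trans h.
  by rewrite mulnCA mulnA.
pose B := S :\: small.
have hB : n <= 2 * #|B|.
  have := cardsID small S; rewrite (setIidPr smallS) -/n -/B. lia.
pose A := [set L : {ffun 'I_r -> pt d N} | [forall i, L i \in S]].
pose G (x : pt d N) := A :&: [set L | good p x L].
have hG : forall x, x \in B -> n ^ r <= 2 * #|G x|.
  move=> x; rewrite !inE negb_and -leqNgt => /andP[hx xS].
  rewrite xS /= in hx.
  have hA : #|A| = n ^ r by rewrite card_allin.
  have hD : A :\: [set L | good p x L] =
      [set L : {ffun 'I_r -> pt d N} | [forall i, L i \in S :\: cls x]].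
    apply/setP => L; rewrite !inE /good negb_exists.
    apply/andP/forallP => [[/forallP h1 /forallP h2] i|h].
      move: (h1 i); rewrite !inE (h2 i) /= andbT congrE.
      by rewrite [residue p x == _]eq_sym.
    split; apply/forallP => i; move: (h i); rewrite !inE.
      by rewrite congrE [residue p x == _]eq_sym; case: (L i \in S); case: (_ == _).
    by case: (L i \in S); rewrite ?andbF.
  have := cardsID [set L | good p x L] A; rewrite hD card_allin hA -/(G x).
  rewrite cardsD (setIidPr (clsS x)).
  have cx : 0 < #|cls x| by rewrite card_gt0; apply/set0Pn; exists x; apply: clsx.
  have cn : #|cls x| <= n by apply: subset_leq_card.
  have hh := @half_bound n #|cls x| r n0 cn.
  have : n <= r * #|cls x|.
    apply: (leq_trans hx); rewrite leq_mul2r; apply/orP; right; exact: hr.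
  move/hh; rewrite -/n; set P := (n - _) ^ r; set Q := n ^ r; lia.
have hsum : \sum_(x in B) #|G x| <= good_count p r S.
  rewrite /good_count; set P := [set xL | _].
  have E : #|P| = \sum_(x : pt d N) \sum_(L : {ffun 'I_r -> pt d N}) (((x, L) \in P) : nat).
    rewrite pair_big /= -sum1_card big_mkcond /=.
    by apply: eq_bigr => -[x L] _; case: ((x, L) \in P).
  rewrite E.
  rewrite big_mkcond /=; apply: leq_sum => x _.
  case: ifP => xB; last by [].
  rewrite -sum1_card big_mkcond /=; apply: leq_sum => L _.
  have xS : x \in S by move: xB; rewrite inE => /andP[].
  by rewrite !inE xS /=; case: (_ && _).
have : \sum_(x in B) n ^ r <= 2 * \sum_(x in B) #|G x|.
  rewrite big_distrr /=; apply: leq_sum => x; exact: hG.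
rewrite sum_nat_const expnS => h.
have : n * n ^ r <= 2 * #|B| * n ^ r by rewrite leq_mul2r hB orbT.
set X := n ^ r. lia.
Qed.
From Stdlib Require Import Reals Lra.
From Stdlib Require Znat.
Open Scope R_scope.

Lemma INR_toZ z : (0 <= z)%Z -> INR (Z.to_nat z) = IZR z.
Proof. move=> h; by rewrite INR_IZR_INZ Znat.Z2Nat.id. Qed.

Lemma nat_above (M : R) : exists N0 : nat, M < INR N0.
Proof.
case: (Rle_or_lt M 0) => h.
  exists 1%nat; rewrite /=; lra.
exists (Z.to_nat (up M)); have [h1 _] := archimed M.
rewrite INR_toZ //; apply: le_IZR; lra.
Qed.

Lemma growth (d : nat) (kappa eta : R) : 0 <= kappa -> kappa < INR d -> 0 < eta ->
  (kappa = 0 -> 2 <= eta) ->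
  exists N0 : nat, forall N : nat, leq N0 N ->
    1 < ln (INR N) /\ 2 <= eta * Rpower (ln (INR N)) (INR d * kappa / (INR d - kappa)).
Proof.
move=> k0 kd e0 hk0.
have lnbig : forall N : nat, 4 < INR N -> 1 < ln (INR N).
  move=> N hN; rewrite -[1]ln_exp; apply: ln_increasing; first exact: exp_pos.
  have := exp_le_3; lra.
case: (Rle_lt_or_eq _ _ k0) => hk; last first.
  subst kappa; have e2 := hk0 erefl.
  exists 5%nat => N hN; split.
    apply: lnbig; have : (5 <= N)%coq_nat by apply/leP.
    move/le_INR; rewrite /=; lra.
  rewrite Rmult_0_r /Rdiv Rmult_0_l /Rpower Rmult_0_l exp_0; lra.
set e := INR d * kappa / (INR d - kappa).
have epos : 0 < e by rewrite /e; apply: Rdiv_lt_0_compat; nra.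
set B := ln (2 / eta) / e.
have [N0 hN0] := nat_above (Rmax (exp (exp B)) 4).
exists N0 => N hN.
have hN' : Rmax (exp (exp B)) 4 < INR N.
  apply: (Rlt_le_trans _ _ _ hN0); apply: le_INR; exact/leP.
have h4 : 4 < INR N by have := Rmax_r (exp (exp B)) 4; lra.
have hE : exp (exp B) < INR N by have := Rmax_l (exp (exp B)) 4; lra.
have l1 := lnbig N h4; split => //.
have hl : exp B < ln (INR N).
  by rewrite -[exp B]ln_exp; apply: ln_increasing => //; exact: exp_pos.
have hll : B < ln (ln (INR N)).
  by rewrite -[B]ln_exp; apply: ln_increasing => //; exact: exp_pos.
have : ln (2 / eta) < e * ln (ln (INR N)).
  have -> : ln (2 / eta) = e * B by rewrite /B; field; lra.
  apply: Rmult_lt_compat_l => //.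
move/exp_increasing; rewrite exp_ln; last by apply: Rdiv_lt_0_compat; lra.
rewrite /Rpower => h.
have : eta * (2 / eta) <= eta * exp (e * ln (ln (INR N))).
  apply: Rmult_le_compat_l; lra.
have -> : eta * (2 / eta) = 2 by field; lra.
by [].
Qed.

Lemma Rpow_pos x y : 0 < Rpower x y.
Proof. rewrite /Rpower; exact: exp_pos. Qed.

Lemma expn_pow m n : expn m n = Nat.pow m n.
Proof. elim: n => [|n IH]; first by rewrite expn0. by rewrite expnS IH. Qed.

Close Scope R_scope.

Theorem lemma3p2 (d : nat) (kappa K : R) :
  (0 < d)%N -> (0 <= kappa)%R -> (kappa < INR d)%R -> (0 < K)%R ->
  exists C1 : R, forall tau eta : R, (0 < tau)%R -> (0 < eta)%R ->
    (C1 * Rpower tau kappa <= eta)%R ->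
    exists c : R, (0 < c)%R /\
    exists N0 : nat, forall N : nat, (N0 <= N)%N ->
    forall S : {set pt d N}, S != set0 -> in_box S ->
      (forall p : nat, in_PI tau d kappa N p ->
         (INR (num_classes p S) <= K * Rpower (INR p) kappa)%R) ->
      forall p : nat, in_PI tau d kappa N p ->
        (c * INR #|S| ^ (r_of eta d kappa N).+1 <=
           INR (good_count p (r_of eta d kappa N) S))%R.
Proof.
move=> d0 k0 kd K0.
exists (4 * K * Rpower 2 kappa + 2)%R => tau eta t0 e0 hC.
have A0 := Rpow_pos 2 kappa; have B0 := Rpow_pos tau kappa.
have hk0 : kappa = 0%R -> (2 <= eta)%R.
  move=> hk; move: hC; rewrite hk (Rpower_O 2) ?(Rpower_O tau) //; try lra; nra.
have [N0 hN0] := growth k0 kd e0 hk0.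
exists (/4)%R; split; first lra.
exists N0 => N hN S Sne _ hcl p hp.
have [l1 hT] := hN0 N hN.
set e := (INR d * kappa / (INR d - kappa))%R in hT.
set T := Rpower (ln (INR N)) e in hT.
have T0 : (0 < T)%R by apply: Rpow_pos.
have hm := hcl p hp.
case: hp => pp [_ hp2].
have p0 : (0 < INR p)%R by apply: (lt_INR 0); apply/ltP; exact: prime_gt0.
set X := Rpower (ln (INR N)) (INR d / (INR d - kappa)) in hp2.
have X0 : (0 < X)%R by apply: Rpow_pos.
have hpk : (Rpower (INR p) kappa <= Rpower 2 kappa * Rpower tau kappa * T)%R.
  apply: Rle_trans (Rle_Rpower_l _ _ _ k0 (conj p0 hp2)) _.
  rewrite -Rpower_mult_distr; try nra.
  rewrite -Rpower_mult_distr; try lra.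
  rewrite /X Rpower_mult /T /e.
  have -> : (INR d / (INR d - kappa) * kappa = INR d * kappa / (INR d - kappa))%R.
    by field; lra.
  lra.
set m := num_classes p S in hm.
have hm4 : (4 * INR m <= eta * T)%R.
  have h1 : ((4 * K * Rpower 2 kappa + 2) * Rpower tau kappa * T <= eta * T)%R.
    by apply: Rmult_le_compat_r; lra.
  have h2 : (K * Rpower (INR p) kappa <= K * (Rpower 2 kappa * Rpower tau kappa * T))%R.
    by apply: Rmult_le_compat_l; lra.
  have h3 : (0 < Rpower tau kappa * T)%R by nra.
  nra.
set r := r_of eta d kappa N.
have hr : (2 * m <= r)%N.
  have [b1 b2] := base_Int_part (eta * T).
  have ip0 : (0 <= Int_part (eta * T))%Z.
    apply: le_IZR; have := pos_INR m; lra.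
  have hrr : INR r = IZR (Int_part (eta * T)) by rewrite /r /r_of INR_toZ.
  have : (INR (2 * m) <= INR r)%R.
    rewrite mult_INR hrr /=; have := pos_INR m; lra.
  by move/INR_le/leP.
have := comb Sne hr.
move/leP/le_INR; rewrite mult_INR expn_pow pow_INR /= -/r.
lra.
Qed.
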